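(* Let $q\in(0.5,1)$. Consider the discrete-time system $$x_{k+1}=f(x_k)+G(x_k)u_k+w_k,$$ with state $x_k\in\mathbb{R}^n$, input $u_k\in\mathbb{R}^m$, disturbance $w_k\in\mathbb{R}^n$, and unknown functions $f:\mathbb{R}^n\to\mathbb{R}^n$, $G:\mathbb{R}^n\to\mathbb{R}^{n\times m}$. Let $H=[h_1,\dots,h_{n_c}]^\top\in\mathbb{R}^{n_c\times n}$ and $d=[d_1,\dots,d_{n_c}]^\top\in\mathbb{R}^{n_c}$. Assume: (A1) matrices $A\in\mathbb{R}^{n\times n}$, $B\in\mathbb{R}^{m\times m}$-compatible $B\in\mathbb{R}^{n\times m}$ are known, with approximation error $e(x,u):=f(x)+G(x)u-(Ax+Bu)$; (A2) the disturbance $w_k$ follows $\mathcal{N}(\mu_w,\Sigma_w)$ with known $\mu_w\in\mathbb{R}^n$, $\Sigma_w\in\mathbb{R}^{n\times n}$, and $w_k$ is uncorrelated with the exploration term $\varepsilon_k$ below; (A3) for a positive integer $\tau$, numbers $\bar\delta_j<\infty$, $\bar\Delta_j<\infty$ ($j=1,\dots,n_c$) are known with $\bar\delta_j\ge\sup_{x\in\mathbb{R}^n,u\in\mathbb{R}^m}|h_j^\top e(x,u)|$ and $\bar\Delta_j\ge\sup_{x\in\mathbb{R}^n,u\in\mathbb{R}^m}|h_j^\top(A^{\tau-1}+A^{\tau-2}+\cdots+I)e(x,u)|$. Suppose that, when the state at time $k$ is $x_k$, the input is generated as $u_k=\mu(x_k;\theta_k)+\varepsilon_k$ with $\varepsilon_k\sim\mathcal{N}(0,\Sigma_k)$,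 $\Sigma_k\in\mathbb{R}^{m\times m}$. Let $B'=[B,\ I]\in\mathbb{R}^{n\times(m+n)}$. If $$\left\|h_j^\top B'\begin{bmatrix}\Sigma_k&0\\0&\Sigma_w\end{bmatrix}^{1/2}\right\|_2\le\frac{1}{\Phi^{-1}(q)}\Big\{d_j-h_j^\top\big(Ax_k+B\mu(x_k;\theta_k)+\mu_w\big)+\delta_j\Big\}$$ for all $j=1,\dots,n_c$ and all $\delta_j\in\{\bar\delta_j,-\bar\delta_j\}$, then $\Pr\{h_j^\top x_{k+1}\le d_j\}\ge q$ for all $j=1,\dots,n_c$.
   Context: $\Phi$ denotes the cumulative distribution function of the standard normal distribution. $\mu(\cdot;\theta):\mathbb{R}^n\to\mathbb{R}^m$ is a deterministic feedback law (base policy) with parameter $\theta_k$ at time $k$. For a positive semidefinite matrix $M$, $M^{1/2}$ denotes its matrix square root. Probabilities are over the randomness of $\varepsilon_k$ and $w_k$ given the current state $x_k$. $\|\cdot\|_2$ is the Euclidean norm of a row vector. *)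

(* Defs.v *)
From HB Require Import structures.
From mathcomp Require Import all_boot all_order all_algebra.
From mathcomp Require Import all_classical all_reals all_analysis.
Set Implicit Arguments. Unset Strict Implicit. Unset Printing Implicit Defensive.
Import Order.TTheory GRing.Theory Num.Theory.
Local Open Scope classical_set_scope.
Local Open Scope ring_scope.

Definition psd {R : realType} {N : nat} (M : 'M[R]_N) : Prop :=
  M^T = M /\ forall v : 'cV[R]_N, 0 <= (v^T *m M *m v) 0 0.

Definition is_sqrtm {R : realType} {N : nat} (M S : 'M[R]_N) : Prop :=
  psd S /\ S *m S = M.

Definition norm2 {R : realType} {p : nat} (v : 'rV[R]_p) : R :=
  Num.sqrt (\sum_(i < p) v 0 i ^+ 2).

Definition gauss_law {R : realType} (m v : R) (A : set R) : \bar R :=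
  if v == 0 then (\1_A m)%:E else normal_prob m (Num.sqrt v) A.

(* Z is a Gaussian random vector N(mu, S) on the probability space P:
   every linear functional a^T Z is a measurable real random variable
   distributed as N(a^T mu, a^T S a). *)
Definition gaussian_vec {R : realType} {d : measure_display} {T : measurableType d}
  (P : probability T R) {N : nat} (Z : T -> 'cV[R]_N) (mu : 'cV[R]_N) (S : 'M[R]_N)
  : Prop :=
  forall a : 'cV[R]_N,
    measurable_fun setT (fun t => (a^T *m Z t) 0 0) /\
    forall A : set R, measurable A ->
      P ((fun t => (a^T *m Z t) 0 0) @^-1` A) =
      gauss_law ((a^T *m mu) 0 0) ((a^T *m S *m a) 0 0) A.

Definition Phi {R : realType} (t : R) : R :=
  fine (normal_prob 0 1 `]-oo, t]).

Definition Phi_inv {R : realType} (q : R) : R :=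
  inf [set t : R | q <= Phi t].

Definition err {R : realType} {n m : nat}
  (f : 'cV[R]_n -> 'cV[R]_n) (G : 'cV[R]_n -> 'M[R]_(n, m))
  (A : 'M[R]_n) (B : 'M[R]_(n, m)) (x : 'cV[R]_n) (u : 'cV[R]_m) : 'cV[R]_n :=
  f x + G x *m u - (A *m x + B *m u).

(* Main.v *)
Require Import Defs.
From HB Require Import structures.
From mathcomp Require Import all_boot all_order all_algebra.
From mathcomp Require Import all_classical all_reals all_analysis.
From mathcomp Require Import measurable_realfun.
From mathcomp.algebra_tactics Require Import ring lra.
Set Implicit Arguments. Unset Strict Implicit. Unset Printing Implicit Defensive.
Import Order.TTheory GRing.Theory Num.Theory.
Local Open Scope classical_set_scope.
Local Open Scope ring_scope.
Import numFieldNormedType.Exports.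
Section S.
Variable R : realType.
Local Notation N := (@normal_prob R 0 1).

Lemma Nle1 (A : set R) : measurable A -> (N A <= 1)%E.
Proof. by move=> mA; apply: probability_le1. Qed.

Lemma PhiE (t : R) : (Phi t)%:E = N `]-oo, t].
Proof.
rewrite /Phi fineK //; rewrite ge0_fin_numE ?measure_ge0 //.
by apply: (le_lt_trans (Nle1 _)) => //; rewrite ltry.
Qed.

Lemma Phi_mono (s t : R) : s <= t -> Phi s <= Phi t.
Proof.
move=> st; rewrite -lee_fin !PhiE; apply: le_measure; rewrite ?inE //.
by move=> x /=; rewrite !in_itv /= => /le_trans; apply.
Qed.
Lemma Phi_rc (t : R) : Phi (t + k.+1%:R^-1) @[k --> \oo] --> Phi t.
Proof.
pose F : nat -> set R := fun k => [set` `]-oo, t + k.+1%:R^-1]].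
have capF : \bigcap_k F k = `]-oo, t]%classic.
  apply/seteqP; split => x /=.
    move=> Hx; rewrite in_itv /=; rewrite leNgt; apply/negP => tx.
    have [k Hk] := ltr_add_invr tx.
    by move: (Hx k I); rewrite /F /= in_itv /= leNgt Hk.
  rewrite in_itv /= => xt k _; rewrite /F /= in_itv /=.
  by rewrite (le_trans xt) // lerDl invr_ge0.
have h := @nonincreasing_cvg_mu _ _ _ N F.
have mono : {homo F : n m / (n <= m)%N >-> (m <= n)%O}.
  move=> i j ij; apply/subsetPset => x /=; rewrite /F /= !in_itv /= => /le_trans; apply.
  by rewrite lerD2l lef_pV2 ?posrE ?ler_nat // ltr0n.
have H2 : (N \o F) x @[x --> \oo] --> (Phi t)%:E.
  rewrite PhiE -capF.
  have m1 : measurable (\bigcap_n F n) by rewrite capF; exact: measurable_itv.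
  have m2 : forall i, measurable (F i) by move=> i; exact: measurable_itv.
  have f0 : (N (F 0%N) < +oo)%E by apply: (le_lt_trans (Nle1 _) (ltry 1)); exact: m2.
  exact: (h f0 m2 m1 mono).
exact: (fine_cvg H2).
Qed.
Lemma Phi0 : Phi (0 : R) = 2^-1.
Proof.
have e1 := integral_normal_pdf (0:R) 1.
rewrite ge0_symfun_integralT in e1; last 3 first.
- by move=> x; exact: normal_pdf_ge0.
- exact: continuous_normal_pdf (oner_neq0 R).
- move=> x /=; rewrite /normal_pdf oner_eq0 /normal_fun.
  by rewrite !subr0 sqrrN.
have e2 : N `[0, +oo[ = N `]0, +oo[.
  rewrite /normal_prob integral_itv_obnd_cbnd //.
  apply/measurable_EFinP; apply: measurable_funTS; exact: measurable_normal_pdf.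
have hfin : N `]0, +oo[ \is a fin_num.
  rewrite ge0_fin_numE ?measure_ge0 //.
  by apply: (le_lt_trans (Nle1 _)) => //; rewrite ltry.
have e3 : N `]0, +oo[ = (2^-1)%:E.
  rewrite -e2 in hfin *.
  have e1' : (2%:E * N `[0%R,+oo[)%E = 1%E by rewrite /normal_prob set_itvcy.
  rewrite -(fineK hfin) in e1' *.
  move: e1'; rewrite -EFinM => -[h1]; congr EFin.
  have two : (2:R) != 0 by rewrite pnatr_eq0.
  by apply: (mulfI two); rewrite h1 mulfV.
have := PhiE 0; rewrite -setCitvr (@probability_setC _ _ _ N) //.
move=> h.
have e4 : (@Phi R 0)%:E = (1 - (2^-1)%:E)%E by rewrite h; congr (_ - _)%E.
move: e4; rewrite -EFinB => -[->]; lra.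
Qed.

Lemma Phi_big (q : R) : q < 1 -> exists t, q < Phi t.
Proof.
move=> q1.
pose F : nat -> set R := fun k => [set` `]-oo, k%:R]].
have cupF : \bigcup_k F k = setT.
  apply/seteqP; split => x //= _.
  exists (Num.bound `|x|) => //=; rewrite /F /= in_itv /=.
  exact/ltW/(le_lt_trans (ler_norm x))/archi_boundP.
have mono : {homo F : n m / (n <= m)%N >-> (n <= m)%O}.
  move=> i j ij; apply/subsetPset => x /=; rewrite /F /= !in_itv /= => /le_trans; apply.
  by rewrite ler_nat.
have m1 : measurable (\bigcup_n F n) by rewrite cupF.
have m2 : forall i, measurable (F i) by move=> i; exact: measurable_itv.
have H : (N \o F) x @[x --> \oo] --> 1%:E.
  rewrite -(@probability_setT _ _ _ N) -cupF. have h := @nondecreasing_cvg_mu _ _ _ N F. exact: (h m2 m1 mono).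
have H2 : @Phi R k%:R @[k --> \oo] --> (1:R) by exact: (fine_cvg H).
have := cvgr_gt _ H2 _ q1.
move=> /(_ _) H3.
case: H3 => M _ HM; exists M%:R; exact: (HM M (leqnn M)).
Qed.
Lemma Phi_inv_prop (q : R) : 2^-1 < q -> q < 1 ->
  0 < Phi_inv q /\ q <= Phi (Phi_inv q).
Proof.
move=> q2 q1.
pose S := [set t : R | q <= Phi t].
have S0 : S !=set0.
  by have [t Ht] := Phi_big q1; exists t; exact: ltW.
have [t0 t0pos t0q] : exists2 t0 : R, 0 < t0 & Phi t0 < q.
  have H := Phi_rc (t := 0).
  rewrite Phi0 in H.
  have := cvgr_lt _ H _ q2.
  move=> /(_ _) H3.
  case: H3 => M _ HM; exists (0 + M.+1%:R^-1); last exact: (HM M (leqnn M)).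
  by rewrite add0r invr_gt0 ltr0n.
have lb : lbound S t0.
  move=> s /= Ss; rewrite leNgt; apply/negP => st0.
  have := Phi_mono (ltW st0).
  by move=> /(le_trans Ss); rewrite leNgt t0q.
have ipos : 0 < inf S by apply: (lt_le_trans t0pos); exact: lb_le_inf.
split; first exact: ipos.
have H := Phi_rc (t := inf S).
apply: (cvgr_to_ge H).
near=> k.
have [s Ss Hs] : exists2 s, S s & s < inf S + k.+1%:R^-1.
  by apply: inf_lt => //; rewrite ltrDl invr_gt0 ltr0n.
exact: (le_trans Ss (Phi_mono (ltW Hs))).
Unshelve. all: by end_near.
Qed.
Lemma affine_derive (m s x : R) : is_derive x 1 (fun y : R => m + s * y) s.
Proof.
apply: is_derive_eq.
by rewrite add0r mul1r; exact: mulr1.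
Qed.
Lemma affine_Ny (m s : R) : 0 < s -> (m + s * x) @[x --> -oo] --> -oo.
Proof.
move=> s0; apply/cvgrNyPler => A _.
exists ((A - m)/s); split; first exact: num_real.
move=> x /= xlt.
rewrite -lerBrDl -ler_pdivlMl // mulrC; exact: ltW.
Qed.
Lemma pdf_affine (m s y : R) : 0 < s ->
  normal_pdf m s (m + s * y) * s = normal_pdf 0 1 y.
Proof.
move=> s0.
rewrite /normal_pdf gt_eqF // oner_eq0 /normal_peak /normal_fun.
rewrite (addrC m) addrK subr0 expr1n mul1r.
have sn0 : s != 0 by rewrite gt_eqF.
have e : - (s * y) ^+ 2 / (s ^+ 2 *+ 2) = - y ^+ 2 / (1 *+ 2).
  by field; rewrite ?sn0 ?pnatr_eq0.
rewrite e -mulrnAr sqrtrM ?sqr_ge0 // sqrtr_sqr gtr0_norm // invfM.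
rewrite [LHS]mulrC !mulrA mulfV // mul1r.
by congr (_ * _).
Qed.

Lemma normal_scale (m s c : R) : 0 < s ->
  normal_prob m s `]-oo, c] = N `]-oo, (c - m) / s].
Proof.
move=> s0.
pose F := fun y : R => m + s * y.
have dF : F^`()%classic = cst s.
  by apply/funext => x; rewrite derive1E; apply: derive_val; exact: affine_derive.
have Fb : F ((c - m) / s) = c by rewrite /F mulrC divfK ?gt_eqF // addrC subrK.
have := @increasing_ge0_integration_by_substitutionNy R F (normal_pdf m s) ((c - m) / s).
rewrite Fb dF.
have dFx : forall x, derivable F x 1 by move=> x; exact: (@ex_derive _ _ _ x 1 F s (affine_derive m s x)).
have cF : continuous F.
  by move=> x; exact/differentiable_continuous/derivable1_diffP/dFx.
move=> H; rewrite [LHS]/normal_prob H.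
- apply: eq_integral => y _; congr EFin.
  by rewrite fctE /F /= pdf_affine.
- by move=> x y _ _ xy; rewrite /F ltrD2l ltr_pM2l.
- by move=> x _; exact: cst_continuous.
- exact: is_cvg_cst.
- exact: cvg_cst.
- split; first by move=> x _; exact: dFx.
  exact: cvg_at_left_filter (cF _).
- exact: affine_Ny.
- by apply: continuous_subspaceT; apply: continuous_normal_pdf; rewrite gt_eqF.
- by move=> x _; exact: normal_pdf_ge0.
Qed.
Lemma entryD3 (p : nat) (h : 'M[R]_(1,p)) (X1 X2 X3 : 'M[R]_(p,1)) :
  (h *m (X1 + X2 + X3)) 0 0 = (h *m X1) 0 0 + (h *m X2) 0 0 + (h *m X3) 0 0.
Proof. by rewrite !mulmxDr !mxE. Qed.
Lemma entryD2 (p : nat) (h : 'M[R]_(1,p)) (X1 X2 : 'M[R]_(p,1)) :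
  (h *m (X1 + X2)) 0 0 = (h *m X1) 0 0 + (h *m X2) 0 0.
Proof. by rewrite !mulmxDr !mxE. Qed.
End S.
Unset Implicit Arguments.

Theorem lemma1 (R : realType) (n m nc : nat) (Theta : Type)
  (f : 'cV[R]_n -> 'cV[R]_n) (G : 'cV[R]_n -> 'M[R]_(n, m))
  (A : 'M[R]_n) (B : 'M[R]_(n, m)) (H : 'M[R]_(nc, n)) (d : 'cV[R]_nc)
  (mu_w : 'cV[R]_n) (Sigma_w : 'M[R]_n)
  (tau : nat) (dbar Dbar : 'I_nc -> R)
  (mu : 'cV[R]_n -> Theta -> 'cV[R]_m) (q : R)
  (dsp : measure_display) (Omega : measurableType dsp) (P : probability Omega R)
  (Z : Omega -> 'cV[R]_(m + n))
  (xk : 'cV[R]_n) (thetak : Theta) (Sigma_k : 'M[R]_m)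
  (Sroot : 'M[R]_(m + n)) :
  1 / 2 < q < 1 ->
  psd Sigma_k -> psd Sigma_w ->
  (0 < tau)%N ->
  (forall j x u, `| (row j H *m err f G A B x u) 0 0 | <= dbar j) ->
  (forall j x u,
     `| (row j H *m ((\sum_(i < tau) A ^+ i) *m err f G A B x u)) 0 0 | <= Dbar j) ->
  (* Z = [eps_k; w_k] jointly Gaussian, eps_k ~ N(0, Sigma_k), w_k ~ N(mu_w, Sigma_w),
     eps_k and w_k uncorrelated *)
  gaussian_vec P Z (col_mx 0 mu_w) (block_mx Sigma_k 0 0 Sigma_w) ->
  is_sqrtm (block_mx Sigma_k 0 0 Sigma_w) Sroot ->
  (forall (j : 'I_nc) (delta : R), delta = dbar j \/ delta = - dbar j ->
     norm2 (row j H *m row_mx B 1%:M *m Sroot)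
       <= (Phi_inv q)^-1 *
          (d j 0 - (row j H *m (A *m xk + B *m mu xk thetak + mu_w)) 0 0 + delta)) ->
  forall j : 'I_nc,
    exists E : set Omega,
      [/\ measurable E,
          E `<=` [set t | (row j H *m
                    (f xk + G xk *m (mu xk thetak + usubmx (Z t)) + dsubmx (Z t))) 0 0
                          <= d j 0]
        & (q%:E <= P E)%E].
Proof.
move=> /andP[q2 q1] _ _ _ hdbar _ hZ [[Str _] SS] hyp j.
have q2' : 2^-1 < q by rewrite -div1r.
have [Tpos PhiT] := Phi_inv_prop q2' q1.
set h := row j H.
set r := h *m row_mx B 1%:M.
set mux := mu xk thetak.
pose s := fun t => (r *m Z t) 0 0.
set Y := (h *m (A *m xk + B *m mux)) 0 0.
pose b := d j 0 - Y - dbar j.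
have [ms hP] := hZ r^T.
rewrite trmxK in ms hP.
exists (s @^-1` [set` `]-oo, b]]); split.
- by have := ms measurableT _ (measurable_itv `]-oo, b]); rewrite setTI.
- move=> t /=; rewrite in_itv /= => hst.
  set eps := usubmx (Z t); set w := dsubmx (Z t).
  have Zt : Z t = col_mx eps w by rewrite vsubmxK.
  have e1 : f xk + G xk *m (mux + eps) + w =
      err f G A B xk (mux + eps) + (A *m xk + B *m mux) + (B *m eps + w).
    by apply/matrixP => i k; rewrite /err !mulmxDr !mxE; lra.
  have e2 : s t = (h *m (B *m eps + w)) 0 0.
    by rewrite /s Zt /r -mulmxA mul_row_col mul1mx.
  rewrite e1 entryD3 -e2 -/Y.
  have := hdbar j xk (mux + eps); rewrite -/h => /(le_trans (ler_norm _)).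
  rewrite /b in hst; lra.
- have mw_eq : (r *m col_mx 0 mu_w) 0 0 = (h *m mu_w) 0 0.
    by rewrite /r -mulmxA mul_row_col mulmx0 add0r mul1mx.
  have v_eq : (r *m block_mx Sigma_k 0 0 Sigma_w *m r^T) 0 0 = norm2 (r *m Sroot) ^+ 2.
    have -> : r *m block_mx Sigma_k 0 0 Sigma_w *m r^T = (r *m Sroot) *m (r *m Sroot)^T.
      by rewrite -SS [(r *m Sroot)^T]trmx_mul Str !mulmxA.
    rewrite /norm2 sqr_sqrtr; last by apply: sumr_ge0 => i _; exact: sqr_ge0.
    by rewrite mxE; apply: eq_bigr => i _; rewrite expr2 [X in _ * X]mxE.
  rewrite hP; last exact: measurable_itv.
  rewrite mw_eq v_eq.
  set sg := norm2 (r *m Sroot).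
  set mw := (h *m mu_w) 0 0.
  have sg0 : 0 <= sg by exact: sqrtr_ge0.
  have hy := hyp j (- dbar j) (or_intror erefl).
  rewrite -/h -/r -/sg entryD2 -/mux -/Y -/mw in hy.
  have hy' : Phi_inv q * sg <= b - mw.
    have := ler_wpM2l (ltW Tpos) hy; rewrite mulrA mulfV ?gt_eqF // mul1r.
    by rewrite /b; lra.
  rewrite /gauss_law; case: eqP => [v0|vn0].
  + have sg00 : sg = 0 by move/eqP: v0; rewrite sqrf_eq0 => /eqP.
    rewrite sg00 mulr0 in hy'.
    rewrite indicE mem_set ?lee_fin; first exact: ltW.
    by rewrite /= in_itv /=; lra.
  + have sgpos : 0 < sg.
      by rewrite lt_neqAle sg0 andbT eq_sym; apply/eqP => sg00; apply: vn0; rewrite sg00 expr0n.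
    rewrite sqrtr_sqr ger0_norm // normal_scale // -PhiE lee_fin.
    apply: (le_trans PhiT); apply: Phi_mono.
    by rewrite ler_pdivlMr.
Qed.
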